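(* Let $I$ be a list of items with sizes in $(1/3,1]$ whose optimal packing consists of $k=\mathrm{OPT}(I)$ bins, each containing exactly one large item and one medium item; for $i\in[k]$ let $l_i$ and $m_i$ be the large and the medium item of the $i$-th bin of this optimal packing. Let $\pi\in\mathcal{S}_n$ be any permutation and let $X$ be the number of indices $i\in[k]$ such that $l_i$ arrives before $m_i$ in $I^\pi$. Then the Best Fit packing of $I^\pi$ contains at least $X$ bins that each consist of exactly one large item and one medium item.
   Context: An item of size $x$ is large if $x>1/2$ and medium if $x\in(1/3,1/2]$. Bin packing: items with sizes in $(0,1]$ are packed into unit-capacity bins (total size per bin at most $1$); $\mathrm{OPT}(I)$ is the minimum number of bins. The online algorithm Best Fit processes the items in the given order and packs the current item into the fullest bin (largest current load) into which it fits, opening a new bin if it fits into no existing bin; items are never moved. For $\pi\in\mathcal{S}_n$ (permutations of $[n]$) and $I=(x_1,\ldots,x_n)$, $I^\pi=(x_{\pi(1)},\ldots,x_{\pi(n)})$. *)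

(* Defs.v *)
From HB Require Import structures.
From mathcomp Require Import all_boot all_order all_algebra all_fingroup.
Set Implicit Arguments. Unset Strict Implicit. Unset Printing Implicit Defensive.
Import Order.TTheory GRing.Theory Num.Theory.
Local Open Scope ring_scope.

Section BinPacking.
Variables (R : realFieldType) (n : nat) (x : 'I_n -> R).

Definition large (j : 'I_n) : bool := 2^-1 < x j.
Definition medium (j : 'I_n) : bool := (3^-1 < x j) && (x j <= 2^-1).

Definition is_packing (b : nat) (f : 'I_n -> 'I_b) : Prop :=
  forall c : 'I_b, \sum_(j | f j == c) x j <= 1.

Definition opt_is (k : nat) : Prop :=
  (exists f : 'I_n -> 'I_k, is_packing f) /\
  (forall (b : nat) (f : 'I_n -> 'I_b), is_packing f -> (k <= b)%N).

(* Best Fit: a state is the list of open bins, each a list of items. *)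
Definition load (B : seq 'I_n) : R := \sum_(j <- B) x j.

Definition fits (j : 'I_n) (B : seq 'I_n) : bool := load B + x j <= 1.

(* One Best Fit step for item j; ties among fullest bins are resolved
   arbitrarily (any choice is allowed). *)
Definition bf_step (bins : seq (seq 'I_n)) (j : 'I_n)
  (bins' : seq (seq 'I_n)) : Prop :=
  (exists2 p : nat, (p < size bins)%N /\ fits j (nth [::] bins p) &
     (forall q : nat, (q < size bins)%N -> fits j (nth [::] bins q) ->
        load (nth [::] bins q) <= load (nth [::] bins p)) /\
     bins' = set_nth [::] bins p (j :: nth [::] bins p))
  \/
  ((forall q : nat, (q < size bins)%N -> ~~ fits j (nth [::] bins q)) /\
     bins' = rcons bins [:: j]).

Inductive bf_run : seq (seq 'I_n) -> seq 'I_n -> seq (seq 'I_n) -> Prop :=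
| bf_nil bins : bf_run bins [::] bins
| bf_cons bins j s bins1 out :
    bf_step bins j bins1 -> bf_run bins1 s out -> bf_run bins (j :: s) out.

Definition LM_bin (B : seq 'I_n) : bool :=
  if B is [:: a; c] then (large a && medium c) || (medium a && large c)
  else false.

End BinPacking.

(* Main.v *)
Require Import Defs.
From HB Require Import structures.
From mathcomp Require Import all_boot all_order all_algebra all_fingroup.
From mathcomp Require Import lra zify.
Import Order.TTheory GRing.Theory Num.Theory.
Local Open Scope ring_scope.
Set Implicit Arguments. Unset Strict Implicit. Unset Printing Implicit Defensive.

Section Proof.
Variables (R : realFieldType) (n k : nat) (x : 'I_n -> R)
  (l m : 'I_k -> 'I_n) (pi : 'S_n).
Hypothesis Hx : forall j : 'I_n, 3^-1 < x j /\ x j <= 1.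
Hypothesis Hl : injective l.
Hypothesis Hm : injective m.
Hypothesis Hlm : forall i i', l i != m i'.
Hypothesis Hcov : forall j : 'I_n, exists i, j = l i \/ j = m i.
Hypothesis Hpair : forall i, large x (l i) /\ medium x (m i) /\ x (l i) + x (m i) <= 1.

Definition r (j : 'I_n) : nat := (pi^-1)%g j.

Lemma r_inj : injective r.
Proof. move=> a b /val_inj; exact: perm_inj. Qed.

Lemma xl_gt i : 2^-1 < x (l i).
Proof. by have [+ _] := Hpair i; rewrite /large. Qed.
Lemma xm_le i : 3^-1 < x (m i) /\ x (m i) <= 2^-1.
Proof. by have [_ [+ _]] := Hpair i; rewrite /medium => /andP [-> ->]. Qed.
Lemma lm_le i : x (l i) + x (m i) <= 1.
Proof. by have [_ [_ ->]] := Hpair i. Qed.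

Lemma load1 y : load x [:: y] = x y.
Proof. by rewrite /load big_cons big_nil addr0. Qed.
Lemma load2 y z : load x [:: y; z] = x y + x z.
Proof. by rewrite /load !big_cons big_nil addr0. Qed.

Lemma load_ge0 B : 0 <= load x B.
Proof.
rewrite /load; elim: B => [|a B IH]; first by rewrite big_nil.
rewrite big_cons; have [h _] := Hx a; lra.
Qed.

Lemma bin_shape B : B != [::] -> load x B <= 1 ->
  (exists y, B = [:: y]) \/ (exists y z, B = [:: y; z]).
Proof.
case: B => [|a [|b [|c rest]]] // _.
- by left; exists a.
- by right; exists a, b.
- rewrite /load !big_cons => h.
  have := load_ge0 rest; rewrite /load => h0.
  have [ha _] := Hx a; have [hb _] := Hx b; have [hc _] := Hx c. lra.
Qed.


Definition u a := 1 - x (m a).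
Definition pendS (p : pred 'I_k) (w : R) := [set a | p a && (u a <= w)].
Definition orphS (p : pred 'I_k) (w : R) := [set b | p b && (x (l b) <= w)].
Definition Inv (p o : pred 'I_k) (X L : nat) :=
  forall w : R, (#|pendS p w| + X <= L + #|orphS o w|)%N.

Lemma card_transfer (A A' : {set 'I_k}) a c :
  (forall i, i != a -> i != c -> (i \in A') = (i \in A)) ->
  (#|A'| + (a \in A) + ((c \in A) && (c != a)) =
   #|A| + (a \in A') + ((c \in A') && (c != a)))%N.
Proof.
move=> H.
rewrite (cardsD1 a A) (cardsD1 a A') (cardsD1 c (A :\ a)) (cardsD1 c (A' :\ a)) !inE.
have -> : A' :\ a :\ c = A :\ a :\ c.
  apply/setP=> i; rewrite !inE.
  case: (eqVneq i c) => //= ic; case: (eqVneq i a) => //= ia; exact: H.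
case: (c != a); case: (a \in A); case: (a \in A'); case: (c \in A); case: (c \in A');
  rewrite /= ?addn0 ?add0n; lia.
Qed.

Ltac gen_bools :=
  repeat match goal with |- context [nat_of_bool ?b] =>
    let N := fresh "N" in have := leq_b1 b; generalize (nat_of_bool b) as N; intro N end.
Ltac gen_cards :=
  repeat match goal with |- context [#|?A|] =>
    let N := fresh "C" in generalize (#|A|) as N; intro N end.

Lemma local_w p o p' o' X L X' L' a c w :
  (#|pendS p w| + X <= L + #|orphS o w|)%N ->
  (forall i, i != a -> i != c -> p' i = p i /\ o' i = o i) ->
  (X' + (a \in pendS p' w) + ((c \in pendS p' w) && (c != a))
       + (a \in orphS o w) + ((c \in orphS o w) && (c != a)) + L
     <= X + (a \in pendS p w) + ((c \in pendS p w) && (c != a))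
       + (a \in orphS o' w) + ((c \in orphS o' w) && (c != a)) + L')%N ->
  (#|pendS p' w| + X' <= L' + #|orphS o' w|)%N.
Proof.
move=> Hinv Hrest Hloc.
have h1 := @card_transfer (pendS p w) (pendS p' w) a c.
have h2 := @card_transfer (orphS o w) (orphS o' w) a c.
have e1 : forall i, i != a -> i != c -> (i \in pendS p' w) = (i \in pendS p w).
  by move=> i ia ic; rewrite !inE; have [-> _] := Hrest i ia ic.
have e2 : forall i, i != a -> i != c -> (i \in orphS o' w) = (i \in orphS o w).
  by move=> i ia ic; rewrite !inE; have [_ ->] := Hrest i ia ic.
move: (h1 e1) (h2 e2) Hloc Hinv.
set pa := (a \in pendS p w); set pa' := (a \in pendS p' w).
set pc := (c \in pendS p w) && _; set pc' := (c \in pendS p' w) && _.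
set oa := (a \in orphS o w); set oa' := (a \in orphS o' w).
set oc := (c \in orphS o w) && _; set oc' := (c \in orphS o' w) && _.
set A := #|pendS p w|; set A' := #|pendS p' w|.
set B := #|orphS o w|; set B' := #|orphS o' w|.
clearbody pa pa' pc pc' oa oa' oc oc' A A' B B'.
gen_bools; lia.
Qed.

Lemma inv_local p o p' o' X L X' L' a c :
  Inv p o X L ->
  (forall i, i != a -> i != c -> p' i = p i /\ o' i = o i) ->
  (forall w, (X' + (a \in pendS p' w) + ((c \in pendS p' w) && (c != a))
       + (a \in orphS o w) + ((c \in orphS o w) && (c != a)) + L
     <= X + (a \in pendS p w) + ((c \in pendS p w) && (c != a))
       + (a \in orphS o' w) + ((c \in orphS o' w) && (c != a)) + L')%N) ->
  Inv p' o' X' L'.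
Proof. by move=> Hinv Hrest Hloc w; apply: local_w (Hinv w) Hrest (Hloc w). Qed.

Lemma drop0 p o p' o' X L a :
  Inv p o X L -> p a ->
  (forall i, i != a -> p' i = p i /\ o' i = o i) ->
  p' a = false -> o a = false ->
  (forall b, o b -> u a < x (l b)) ->
  Inv p' o' X.+1 L.
Proof.
move=> Hinv pa Hrest p'a oa Hno w.
have key : forall v, u a <= v -> pendS p' w \subset pendS p v ->
    orphS o v \subset orphS o' w -> (#|pendS p' w| + X.+1 <= L + #|orphS o' w|)%N.
  move=> v hv s1 s2.
  have s3 : pendS p' w \subset pendS p v :\ a.
    apply/subsetP=> i ii; rewrite !in_setD1 (subsetP s1 _ ii) andbT.
    by apply/eqP=> ia; move: ii; rewrite ia inE p'a.
  have := subset_leq_card s3; have := subset_leq_card s2.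
  have := Hinv v; rewrite (cardsD1 a (pendS p v)) inE pa hv /=; lia.
case: (lerP (u a) w) => h.
- apply: (key w h); apply/subsetP=> i; rewrite !inE.
    case: (eqVneq i a) => [->|ia]; first by rewrite p'a.
    by have [-> _] := Hrest i ia.
  case: (eqVneq i a) => [->|ia]; first by rewrite oa.
  by have [_ ->] := Hrest i ia.
- apply: (key (u a) (lexx _)); apply/subsetP=> i; rewrite !inE.
    case: (eqVneq i a) => [->|ia]; first by rewrite p'a.
    have [-> _] := Hrest i ia; case/andP=> -> hi /=; apply: le_trans hi (ltW h).
  case/andP=> oi hi; have := Hno i oi; rewrite ltNge hi //.
Qed.

Lemma drop1 p o p' o' X L a c :
  Inv p o X L -> p a -> c != a ->
  (forall i, i != a -> i != c -> p' i = p i /\ o' i = o i) ->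
  p' a = false -> o a = false -> o' a = false ->
  p c = false -> p' c = ~~ o c -> o' c = false ->
  (forall b, o b -> x (l b) <= u a -> x (l b) <= x (l c)) ->
  x (l c) <= u c ->
  Inv p' o' X.+1 L.+1.
Proof.
move=> Hinv pa ca Hrest p'a oa o'a pc p'c o'c Hno hc w.
have loc : forall Y, (#|pendS p w| + Y <= L + #|orphS o w|)%N ->
   (X.+1 + (~~ o c && (u c <= w)%R && true) + (o c && (x (l c) <= w)%R && true) + L
      <= Y + (u a <= w)%R + L.+1)%N ->
   (#|pendS p' w| + X.+1 <= L.+1 + #|orphS o' w|)%N.
  move=> Y hY hh; apply: (local_w (a:=a) (c:=c) hY Hrest).
  by rewrite !inE p'a oa o'a p'c pc o'c ca pa /= ?andbF /= ?addn0 ?add0n.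
case: (lerP (u a) w) => h.
- apply: (loc X (Hinv w)); rewrite h !andbT; move: (o c) (u c <= w)%R (x (l c) <= w)%R.
  by clear; move=> [] [] [] /=; lia.
case hcw : (x (l c) <= w); last first.
  apply: (loc X (Hinv w)); rewrite !andbT (leNgt (u a) w) h /=.
  have -> : (u c <= w) = false by apply/negbTE; rewrite -ltNge; apply: (lt_le_trans _ hc); rewrite ltNge hcw.
  by rewrite hcw; clear; case: (o c) => /=; lia.
have s1 : pendS p w \subset pendS p (u a) :\ a.
  apply/subsetP=> i; rewrite !inE; case/andP=> pi' hi; rewrite pi' /=.
  rewrite (le_trans hi (ltW h)) andbT; apply/eqP=> ia; move: hi; rewrite ia.
  by rewrite leNgt h.
have s2 : orphS o (u a) \subset orphS o w.
  apply/subsetP=> i; rewrite !inE; case/andP=> oi hi; rewrite oi /=.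
  exact: le_trans (Hno i oi hi) hcw.
apply: (loc X.+1).
  have := subset_leq_card s1; have := subset_leq_card s2.
  have := Hinv (u a); rewrite (cardsD1 a (pendS p (u a))) inE pa lexx /=.
  move: (#|pendS p w|) (#|orphS o w|) (#|pendS p (u a) :\ a|) (#|orphS o (u a)|).
  by clear; move=> *; lia.
rewrite !andbT (leNgt (u a) w) h /=; move: (o c) (u c <= w)%R; clear; move=> [] [] /=; lia.
Qed.



Definition Pt t (bins : seq (seq 'I_n)) : pred 'I_k := fun a =>
  [&& (r (l a) < t)%N, [:: l a] \notin bins & ~~ (r (m a) < t)%N].
Definition Ot t (bins : seq (seq 'I_n)) : pred 'I_k := fun b =>
  ([:: l b] \in bins) && (r (m b) < t)%N.
Definition Xt t := #|[set a : 'I_k | (r (m a) < t)%N && (r (l a) < r (m a))%N]|.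
Definition st_inv t (bins : seq (seq 'I_n)) :=
  [/\ uniq (flatten bins),
      (forall B, B \in bins -> (B != [::]) && (load x B <= 1)),
      (forall j, (j \in flatten bins) = (r j < t)%N) &
      Inv (Pt t bins) (Ot t bins) (Xt t) (count (LM_bin x) bins)].

Ltac close_nat :=
  rewrite /= ?andbT; gen_bools;
  repeat match goal with
  | |- context [Xt ?t] => let N := fresh "X" in generalize (Xt t) as N; intro N
  | |- context [count ?p ?s] => let N := fresh "L" in generalize (count p s) as N; intro N
  end; clear; intros; lia.

Lemma eq_ll i a : (l i == l a) = (i == a). Proof. by apply/eqP/eqP => [/Hl|->]. Qed.
Lemma eq_mm i a : (m i == m a) = (i == a). Proof. by apply/eqP/eqP => [/Hm|->]. Qed.
Lemma eq_lm i a : (l i == m a) = false. Proof. exact: negbTE (Hlm i a). Qed.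
Lemma eq_ml i a : (m i == l a) = false. Proof. by rewrite eq_sym eq_lm. Qed.
Lemma seq1_eq (z y : 'I_n) : ([:: z] == [:: y]) = (z == y).
Proof. by apply/eqP/eqP => [[->]|->]. Qed.

Lemma rltS t j z : r j = t -> (r z < t.+1)%N = (r z < t)%N || (z == j).
Proof.
move=> rj; rewrite ltnS leq_eqVlt orbC; congr (_ || _).
by rewrite -rj (inj_eq r_inj).
Qed.

Lemma in_flat (bs : seq (seq 'I_n)) B z : B \in bs -> z \in B -> z \in flatten bs.
Proof. by move=> h1 h2; apply/flattenP; exists B. Qed.

Lemma flat_perm t bins bins' j : uniq (flatten bins) ->
  (forall z, (z \in flatten bins) = (r z < t)%N) -> r j = t ->
  perm_eq (flatten bins') (j :: flatten bins) ->
  uniq (flatten bins') /\ forall z, (z \in flatten bins') = (r z < t.+1)%N.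
Proof.
move=> hu hm rj hp; split.
  by rewrite (perm_uniq hp) /= hu hm rj ltnn.
by move=> z; rewrite (perm_mem hp) inE hm (rltS _ rj) orbC.
Qed.

Lemma Xt_l t a : r (l a) = t -> Xt t.+1 = Xt t.
Proof.
move=> rj; rewrite /Xt; apply: eq_card => i; rewrite !inE (rltS _ rj) eq_ml orbF //.
Qed.

Lemma Xt_m t a : r (m a) = t -> Xt t.+1 = (Xt t + (r (l a) < t))%N.
Proof.
move=> rj; rewrite /Xt.
have := @card_transfer [set a0 | (r (m a0) < t)%N && (r (l a0) < r (m a0))%N]
   [set a0 | (r (m a0) < t.+1)%N && (r (l a0) < r (m a0))%N] a a.
rewrite !inE eqxx !andbF rj ltnn ltnSn /= !addn0 => ->; first by [].
by move=> i ia _; rewrite !inE (rltS _ rj) eq_mm (negbTE ia) orbF.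
Qed.

Lemma lsingle_lt t bins a : (forall j, (j \in flatten bins) = (r j < t)%N) ->
  [:: l a] \in bins -> (r (l a) < t)%N.
Proof. by move=> hm h; rewrite -hm; apply: (in_flat h); rewrite inE. Qed.

Lemma memJ (b1 b2 : seq (seq 'I_n)) y j z :
  uniq (flatten (b1 ++ [:: y] :: b2)) ->
  ([:: z] \in b1 ++ [:: j; y] :: b2) = ([:: z] \in b1 ++ [:: y] :: b2) && (z != y).
Proof.
move=> hu.
have hy1 : y \notin flatten b1.
  move: hu; rewrite flatten_cat cat_uniq => /and3P [_ h _]; apply: contra h => hy.
  by apply/hasP; exists y => //=; rewrite mem_head.
have hy2 : y \notin flatten b2.
  by move: hu; rewrite flatten_cat cat_uniq => /and3P [_ _] /= /andP [].
rewrite !mem_cat !inE seq1_eq eqseq_cons andbF /=.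
case: (eqVneq z y) => [->|]; rewrite ?andbT ?andbF //.
apply/negbTE; rewrite negb_or; apply/andP; split.
  by apply/negP=> hb; move: hy1; rewrite (in_flat hb) // inE.
by apply/negP=> hb; move: hy2; rewrite (in_flat hb) // inE.
Qed.

Lemma LM_ml a c : LM_bin x [:: m a; l c].
Proof.
rewrite /LM_bin; have [h1 [_ _]] := Hpair c; have [_ [h2 _]] := Hpair a.
by rewrite h1 h2 orbT.
Qed.
Lemma LM_lm a c : LM_bin x [:: l a; m c].
Proof.
rewrite /LM_bin; have [h1 [_ _]] := Hpair a; have [_ [h2 _]] := Hpair c.
by rewrite h1 h2.
Qed.
Lemma LM_mm a c : LM_bin x [:: m a; m c] = false.
Proof.
rewrite /LM_bin /large; have := xm_le a; have := xm_le c.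
rewrite !ltNge; move=> [_ ->] [_ ->]; by rewrite !andbF.
Qed.


Lemma step_join t bins j p : st_inv t bins -> r j = t -> (p < size bins)%N ->
  fits x j (nth [::] bins p) ->
  (forall q, (q < size bins)%N -> fits x j (nth [::] bins q) ->
     load x (nth [::] bins q) <= load x (nth [::] bins p)) ->
  st_inv t.+1 (set_nth [::] bins p (j :: nth [::] bins p)).
Proof.
case=> hu hb hm hI rj hp hfit hmax.
rewrite set_nthE hp.
have Eb : bins = take p bins ++ nth [::] bins p :: drop p.+1 bins.
  by rewrite -drop_nth // cat_take_drop.
have hmax' : forall C, C \in bins -> fits x j C -> load x C <= load x (nth [::] bins p).
  move=> C hC hf; rewrite -(nth_index [::] hC); apply: hmax; rewrite ?index_mem ?nth_index //.
have hB : nth [::] bins p \in bins := mem_nth [::] hp.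
move: hfit hmax' hB Eb; move: (nth [::] bins p) => B hfit hmax' hB Eb.
have /andP [hB1 hB2] := hb B hB.
case: (bin_shape hB1 hB2) => [[y EB]|[y [z EB]]]; last first.
  exfalso; move: hfit; rewrite /fits EB /load !big_cons big_nil.
  have [? _] := Hx y; have [? _] := Hx z; have [? _] := Hx j; lra.
subst B.
have fy : x y + x j <= 1 by move: hfit; rewrite /fits load1.
clear hmax hp hB1 hB2 hfit.
move: Eb; move: (take p bins) (drop p.+1 bins) => b1 b2 Eb; subst bins.
set bs := b1 ++ [:: y] :: b2 in hu hb hm hI hmax' *.
have hperm : perm_eq (flatten (b1 ++ [:: j; y] :: b2)) (j :: flatten bs).
  by apply/seq.permP => q; rewrite /bs !flatten_cat /= !count_cat /= addnCA.
have [hu' hm'] := flat_perm hu hm rj hperm.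
have Ecount : count (LM_bin x) (b1 ++ [:: j; y] :: b2) =
    (count (LM_bin x) bs + LM_bin x [:: j; y])%N.
  by rewrite /bs !count_cat /=; lia.
have EP : forall i, Pt t.+1 (b1 ++ [:: j; y] :: b2) i =
  [&& (r (l i) < t)%N || (l i == j), ~~ (([:: l i] \in bs) && (l i != y))
    & ~~ ((r (m i) < t)%N || (m i == j))].
  by move=> i; rewrite /Pt !(rltS _ rj) (memJ _ _ hu).
have EO : forall i, Ot t.+1 (b1 ++ [:: j; y] :: b2) i =
  [&& [:: l i] \in bs, l i != y & (r (m i) < t)%N || (m i == j)].
  by move=> i; rewrite /Ot !(rltS _ rj) (memJ _ _ hu) andbA.
have hyin : [:: y] \in bs by rewrite /bs mem_cat inE eqxx orbT.
split => //.
  move=> C; rewrite mem_cat inE => /orP [h|/orP [/eqP ->|h]].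
  - by apply: hb; rewrite /bs mem_cat h.
  - by rewrite load2 addrC fy.
  - by apply: hb; rewrite /bs mem_cat inE h !orbT.
rewrite Ecount.
have hlt : forall i, [:: l i] \in bs -> (r (l i) < t)%N by move=> i h; exact: lsingle_lt hm h.
have [a [ja|ja]] := Hcov j; subst j.
- have [c [yc|yc]] := Hcov y; subst y.
    by exfalso; have := xl_gt a; have := xl_gt c; move: fy; lra.
  rewrite (Xt_l rj) LM_lm.
  have Oa : Ot t bs a = false.
    by apply/negbTE/negP => /andP [/hlt]; rewrite rj ltnn.
  apply: (inv_local (a:=a) (c:=a) hI).
    move=> i ia _; rewrite EP EO /Pt /Ot eq_ll (negbTE ia) eq_lm eq_ml /= !orbF !andbT.
    by split.
  move=> w; rewrite /pendS /orphS !inE eqxx !andbF Oa /=.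
  close_nat.
rewrite (Xt_m rj).
have [c [yc|yc]] := Hcov y; subst y.
- rewrite LM_ml.
  case: (eqVneq c a) => [ca|ca].
    subst c; have hla := hlt _ hyin; rewrite hla.
    apply: (inv_local (a:=a) (c:=a) hI).
      move=> i ia _; rewrite EP EO /Pt /Ot eq_lm eq_ll eq_mm (negbTE ia) /= !orbF !andbT.
      by split.
    move=> w; rewrite /pendS /orphS !inE eqxx !andbF EP EO /Ot rj ltnn eq_mm !eqxx /= !andbF.
    close_nat.
  have hc := hlt _ hyin.
  have Pc : Pt t bs c = false by rewrite /Pt hyin /= andbF.
  have P'c : Pt t.+1 (b1 ++ [:: m a; l c] :: b2) c = ~~ Ot t bs c.
    by rewrite EP /Ot hc hyin eqxx eq_mm (negbTE ca) /= ?orbF.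
  have O'c : Ot t.+1 (b1 ++ [:: m a; l c] :: b2) c = false by rewrite EO eqxx /= andbF.
  have P'a : Pt t.+1 (b1 ++ [:: m a; l c] :: b2) a = false.
    by rewrite EP eqxx /= !orbT /= !andbF.
  have Oa : Ot t bs a = false by rewrite /Ot rj ltnn andbF.
  have O'a : Ot t.+1 (b1 ++ [:: m a; l c] :: b2) a = ([:: l a] \in bs).
    by rewrite EO eq_ll [a == c]eq_sym (negbTE ca) eqxx /= orbT andbT.
  have rest : forall i, i != a -> i != c ->
      Pt t.+1 (b1 ++ [:: m a; l c] :: b2) i = Pt t bs i /\
      Ot t.+1 (b1 ++ [:: m a; l c] :: b2) i = Ot t bs i.
    move=> i ia ic; rewrite EP EO /Pt /Ot eq_lm eq_ll (negbTE ic) eq_mm (negbTE ia) /= !orbF !andbT.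
    by split.
  have hcu : x (l c) <= u c by rewrite /u; have := lm_le c; lra.
  case hla_in : ([:: l a] \in bs).
    have hla := hlt _ hla_in; rewrite hla.
    have Pa : Pt t bs a = false by rewrite /Pt hla_in andbF.
    have hx : x (l a) <= x (l c).
      have := hmax' _ hla_in; rewrite /fits !load1; apply; have := lm_le a; lra.
    apply: (inv_local (a:=a) (c:=c) hI rest).
    move=> w; rewrite /pendS /orphS !inE P'a Oa O'a hla_in P'c Pc O'c ca Pa /=.
    have key : ((~~ Ot t bs c && (u c <= w)%R) + (Ot t bs c && (x (l c) <= w)%R)
                 <= (x (l a) <= w)%R)%N.
      case: (Ot t bs c) => /=.
        by case h: (x (l c) <= w) => //=; rewrite (le_trans hx h).
      case h: (u c <= w) => //=.
      by have -> : x (l a) <= w by move: h hx hcu; rewrite /u; lra.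
    move: key; close_nat.
  case hla : (r (l a) < t)%N.
    rewrite /= ?addn1 ?addn0; apply: (drop1 (a:=a) (c:=c) hI _ ca rest P'a Oa _ Pc P'c O'c _ hcu).
    - by rewrite /Pt hla hla_in rj ltnn.
    - by rewrite O'a hla_in.
    - move=> b /andP [hb1 _] hbu; have := hmax' _ hb1; rewrite /fits !load1; apply.
      by move: hbu; rewrite /u; lra.
  have Pa : Pt t bs a = false by rewrite /Pt hla.
  rewrite /= ?addn0; apply: (inv_local (a:=a) (c:=c) hI rest).
  move=> w; rewrite /pendS /orphS !inE P'a Oa O'a hla_in P'c Pc O'c ca Pa /=.
  case: (Ot t bs c) => /=; close_nat.
- rewrite LM_mm addn0.
  have nla : [:: l a] \notin bs.
    apply/negP => h; have := hmax' _ h; rewrite /fits !load1 => H.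
    have : x (l a) <= x (m c) by apply: H; have := lm_le a; lra.
    have := xl_gt a; have := xm_le c; lra.
  have rest : forall i, i != a ->
      Pt t.+1 (b1 ++ [:: m a; m c] :: b2) i = Pt t bs i /\
      Ot t.+1 (b1 ++ [:: m a; m c] :: b2) i = Ot t bs i.
    move=> i ia; rewrite EP EO /Pt /Ot !eq_lm eq_mm (negbTE ia) /= ?orbF ?andbT.
    by split.
  have P'a : Pt t.+1 (b1 ++ [:: m a; m c] :: b2) a = false.
    by rewrite EP eqxx /= !orbT /= !andbF.
  have Oa : Ot t bs a = false by rewrite /Ot rj ltnn andbF.
  case hla : (r (l a) < t)%N.
    rewrite /= ?addn1 ?addn0; apply: (drop0 (a:=a) hI _ rest P'a Oa _).
      by rewrite /Pt hla nla rj ltnn.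
    move=> b /andP [hb1 _]; rewrite ltNge; apply/negP => hbu.
    have := hmax' _ hb1; rewrite /fits !load1 => H.
    have : x (l b) <= x (m c) by apply: H; move: hbu; rewrite /u; lra.
    have := xl_gt b; have := xm_le c; lra.
  have Pa : Pt t bs a = false by rewrite /Pt hla.
  rewrite /= ?addn0; apply: (inv_local (a:=a) (c:=a) hI (fun i ia _ => rest i ia)).
  move=> w; rewrite /pendS /orphS !inE P'a Oa Pa eqxx !andbF /=.
  close_nat.
Qed.


Lemma step_new t bins j : st_inv t bins -> r j = t ->
  (forall q, (q < size bins)%N -> ~~ fits x j (nth [::] bins q)) ->
  st_inv t.+1 (rcons bins [:: j]).
Proof.
case=> hu hb hm hI rj hnf.
have hnf' : forall C, C \in bins -> ~~ fits x j C.
  by move=> C hC; rewrite -(nth_index [::] hC); apply: hnf; rewrite index_mem.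
have hperm : perm_eq (flatten (rcons bins [:: j])) (j :: flatten bins).
  by apply/seq.permP => q; rewrite flatten_rcons count_cat /= addn0 addnC.
have [hu' hm'] := flat_perm hu hm rj hperm.
have Ecount : count (LM_bin x) (rcons bins [:: j]) = count (LM_bin x) bins.
  by rewrite -cats1 count_cat /= ?addn0.
have memN : forall z, ([:: z] \in rcons bins [:: j]) = ([:: z] \in bins) || (z == j).
  by move=> z; rewrite mem_rcons inE seq1_eq orbC.
have EP : forall i, Pt t.+1 (rcons bins [:: j]) i =
  [&& (r (l i) < t)%N || (l i == j), ~~ (([:: l i] \in bins) || (l i == j))
    & ~~ ((r (m i) < t)%N || (m i == j))].
  by move=> i; rewrite /Pt !(rltS _ rj) memN.
have EO : forall i, Ot t.+1 (rcons bins [:: j]) i =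
  (([:: l i] \in bins) || (l i == j)) && ((r (m i) < t)%N || (m i == j)).
  by move=> i; rewrite /Ot !(rltS _ rj) memN.
have hlt : forall i, [:: l i] \in bins -> (r (l i) < t)%N by move=> i h; exact: lsingle_lt hm h.
split => //.
  move=> C; rewrite mem_rcons inE => /orP [/eqP ->|h]; last exact: hb.
  by rewrite load1; have [_ ->] := Hx j.
rewrite Ecount.
have [a [ja|ja]] := Hcov j; subst j.
- rewrite (Xt_l rj).
  have Oa : Ot t bins a = false.
    by apply/negbTE/negP => /andP [/hlt]; rewrite rj ltnn.
  apply: (inv_local (a:=a) (c:=a) hI).
    move=> i ia _; rewrite EP EO /Pt /Ot eq_ll (negbTE ia) !eq_ml /= ?orbF ?andbT.
    by split.
  move=> w; rewrite /pendS /orphS !inE EP !eqxx /= ?orbT /= ?andbF Oa /=.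
  close_nat.
rewrite (Xt_m rj).
have nla : [:: l a] \notin bins.
  by apply/negP => h; have := hnf' _ h; rewrite /fits load1 lm_le.
have rest : forall i, i != a ->
    Pt t.+1 (rcons bins [:: m a]) i = Pt t bins i /\
    Ot t.+1 (rcons bins [:: m a]) i = Ot t bins i.
  move=> i ia; rewrite EP EO /Pt /Ot !eq_lm eq_mm (negbTE ia) /= ?orbF ?andbT.
  by split.
have P'a : Pt t.+1 (rcons bins [:: m a]) a = false.
  by rewrite EP eqxx /= !orbT /= !andbF.
have Oa : Ot t bins a = false by rewrite /Ot rj ltnn andbF.
case hla : (r (l a) < t)%N.
  rewrite /= ?addn1 ?addn0; apply: (drop0 (a:=a) hI _ rest P'a Oa _).
    by rewrite /Pt hla nla rj ltnn.
  move=> b /andP [hb1 _]; have := hnf' _ hb1; rewrite /fits load1 /u -ltNge; lra.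
have Pa : Pt t bins a = false by rewrite /Pt hla.
rewrite /= ?addn0; apply: (inv_local (a:=a) (c:=a) hI (fun i ia _ => rest i ia)).
move=> w; rewrite /pendS /orphS !inE P'a Oa Pa eqxx !andbF /=.
close_nat.
Qed.

Definition full := [seq pi t | t <- enum 'I_n].

Lemma init_inv : st_inv 0 [::].
Proof.
split => //; try by move=> j; rewrite ltn0.
move=> w.
have -> : pendS (Pt 0 [::]) w = set0 by apply/setP => a; rewrite !inE /Pt ltn0.
have -> : Xt 0 = 0%N.
  by rewrite /Xt; apply/eqP; rewrite cards_eq0; apply/eqP/setP => a; rewrite !inE ltn0.
by rewrite cards0.
Qed.

Lemma run_main bins s out : bf_run x bins s out ->
  forall t, s = drop t full -> st_inv t bins -> (Xt n <= count (LM_bin x) out)%N.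
Proof.
elim=> [bins0 | bins0 j s0 bins1 out0 hstep _ IH] t hs hinv.
- have tn : (n <= t)%N.
    by move: (congr1 size hs); rewrite size_drop size_map size_enum_ord /=; lia.
  have -> : Xt n = Xt t.
    by rewrite /Xt; apply: eq_card => a; rewrite !inE ltn_ord (leq_trans (ltn_ord _) tn).
  case: hinv => _ _ _ hI; have := hI 0.
  have -> : orphS (Ot t bins0) 0 = set0.
    apply/setP => b; rewrite !inE; apply/negbTE; rewrite negb_and; apply/orP; right.
    by rewrite -ltNge; have := xl_gt b; lra.
  rewrite cards0; lia.
have ht : (t < size full)%N.
  rewrite ltnNge; apply/negP => h; move: hs; rewrite drop_oversize //.
move: hs; rewrite (drop_nth j ht) => -[ej es].
have rj : r j = t.
  have htn : (t < n)%N by move: ht; rewrite /full size_map size_enum_ord.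
  by rewrite ej /full (nth_map j) ?size_enum_ord // /r permK nth_enum_ord.
apply: (IH t.+1 es).
case: hstep => [[p [hp hfit] [hmax ->]] | [hnf ->]].
  exact: step_join.
exact: step_new.
Qed.

Lemma final out : bf_run x [::] full out ->
  (#|[set i : 'I_k | ((pi^-1)%g (l i) < (pi^-1)%g (m i))%N]| <= count (LM_bin x) out)%N.
Proof.
move=> h; have := run_main h (t:=0) (esym (seq.drop0 full)) init_inv.
suff -> : Xt n = #|[set i : 'I_k | ((pi^-1)%g (l i) < (pi^-1)%g (m i))%N]| by [].
by rewrite /Xt; apply: eq_card => a; rewrite !inE ltn_ord.
Qed.

End Proof.

Theorem lemma10 (R : realFieldType) (n k : nat) (x : 'I_n -> R)
  (l m : 'I_k -> 'I_n) (pi : 'S_n) (out : seq (seq 'I_n)) :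
  (forall j : 'I_n, 3^-1 < x j /\ x j <= 1) ->
  opt_is x k ->
  (* the optimal packing: bin i contains exactly l i and m i, and these
     bins partition the items *)
  injective l -> injective m -> (forall i i', l i != m i') ->
  (forall j : 'I_n, exists i, j = l i \/ j = m i) ->
  (forall i, large x (l i) /\ medium x (m i) /\ x (l i) + x (m i) <= 1) ->
  (* out is the Best Fit packing of I^pi = (x_{pi(1)}, ..., x_{pi(n)}) *)
  bf_run x [::] [seq pi t | t <- enum 'I_n] out ->
  (#|[set i : 'I_k | ((pi^-1)%g (l i) < (pi^-1)%g (m i))%N]|
     <= count (LM_bin x) out)%N.
Proof.
move=> Hx _ Hl Hm Hlm Hcov Hpair Hrun.
exact: (final Hx Hl Hm Hlm Hcov Hpair Hrun).
Qed.
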